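(* Let $n\ge 3$ and let $A_1A_2\dots A_n$ be a polygon in the Euclidean plane, with vertex indices taken modulo $n$. Let $M$ be a point of the plane distinct from all vertices. Suppose that for every $i\in\{1,\dots,n\}$ and every $j\in\{1,\dots,n\}$ with $j\notin\{i,i-1\}$ (mod $n$), the line $A_iM$ meets the line $A_jA_{j+1}$ in a single point $M_{ij}$, and that $M_{ij}\notin\{A_j,A_{j+1}\}$. Then $$\prod_{\substack{i,j=1\\ j\notin\{i,\,i-1\}}}^{n}\frac{\overline{M_{ij}A_j}}{\overline{M_{ij}A_{j+1}}}=(-1)^n .$$
   Context: For three collinear points $X,Y,Z$ with $X\neq Z$, $\frac{\overline{XY}}{\overline{XZ}}$ denotes the ratio of signed (directed) lengths along their common line: it equals $|XY|/|XZ|$ if $Y$ and $Z$ lie on the same side of $X$ on that line, and $-|XY|/|XZ|$ otherwise. *)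

(* Defs.v *)
From mathcomp Require Import all_boot all_order all_algebra.
Set Implicit Arguments. Unset Strict Implicit. Unset Printing Implicit Defensive.
Import Order.TTheory GRing.Theory Num.Theory.
Local Open Scope ring_scope.

Section Plane.
Variable R : rcfType.

Definition vsub (Q P : R * R) : R * R := (Q.1 - P.1, Q.2 - P.2).
Definition dot (u v : R * R) : R := u.1 * v.1 + u.2 * v.2.
Definition dist (P Q : R * R) : R := Num.sqrt (dot (vsub Q P) (vsub Q P)).

(* X lies on the line through P and Q (P <> Q assumed where used) *)
Definition on_line (P Q X : R * R) : Prop :=
  exists t : R, X = (P.1 + t * (Q.1 - P.1), P.2 + t * (Q.2 - P.2)).

(* Signed ratio  XY / XZ  for collinear X, Y, Z with X <> Z:
   |XY|/|XZ| if Y and Z lie on the same side of X (the vectors XY, XZ point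
   the same way), and -|XY|/|XZ| otherwise. When Y = X the value is 0. *)
Definition sratio (X Y Z : R * R) : R :=
  (if 0 <= dot (vsub Y X) (vsub Z X) then 1 else -1) * (dist X Y / dist X Z).
End Plane.

(* Main.v *)
Require Import Defs.
From mathcomp Require Import all_boot all_order all_algebra.
From mathcomp Require Import ring lra zify.
Import Order.TTheory GRing.Theory Num.Theory.
Local Open Scope ring_scope.
Definition cross {R : rcfType} (u v : R * R) : R := u.1 * v.2 - u.2 * v.1.

Lemma cross0_on_line (R : rcfType) (A M P : R * R) :
  A <> M -> cross (vsub M A) (vsub P A) = 0 -> on_line A M P.
Proof.
case: A M P => [a1 a2] [m1 m2] [p1 p2] /= hAM; rewrite /cross /vsub /= => h.
have [h1|h1] := eqVneq (m1 - a1) 0.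
- have h2 : m2 - a2 != 0.
    apply/eqP => h2; apply: hAM; congr pair.
    by apply/eqP; rewrite eq_sym -subr_eq0 h1. by apply/eqP; rewrite eq_sym -subr_eq0 h2.
  exists ((p2 - a2) / (m2 - a2)); congr pair.
  + have : (m2 - a2) * (p1 - a1) = 0 by move: h; rewrite h1 mul0r sub0r => /eqP; rewrite oppr_eq0 => /eqP.
    move/eqP; rewrite mulf_eq0 (negbTE h2) /= => /eqP hp.
    have -> : p1 = a1 by apply/eqP; rewrite -subr_eq0 hp.
    have -> : m1 = a1 by apply/eqP; rewrite -subr_eq0 h1.
    by rewrite subrr mulr0 addr0.
  + by rewrite divfK // addrC subrK.
- exists ((p1 - a1) / (m1 - a1)); congr pair.
  + by rewrite divfK // addrC subrK.
  + apply/eqP; rewrite -subr_eq0; apply/eqP.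
    have e : p2 - (a2 + (p1 - a1) / (m1 - a1) * (m2 - a2)) =
       ((m1 - a1) * (p2 - a2) - (m2 - a2) * (p1 - a1)) / (m1 - a1) by field.
    by rewrite e h mul0r.
Qed.

Lemma sratio_eq (R : rcfType) (Ai M Aj Ak X : R * R) :
  Ai <> M -> on_line Ai M X -> on_line Aj Ak X ->
  (forall Y, on_line Ai M Y -> on_line Aj Ak Y -> Y = X) -> X <> Aj -> X <> Ak ->
  [/\ cross (vsub M Ai) (vsub Aj Ai) != 0, cross (vsub M Ai) (vsub Ak Ai) != 0 &
   sratio X Aj Ak = cross (vsub M Ai) (vsub Aj Ai) / cross (vsub M Ai) (vsub Ak Ai)].
Proof.
move=> hAM hX1 hX2 hU hj hk.
have fj : cross (vsub M Ai) (vsub Aj Ai) != 0.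
  apply/eqP => h; apply: hj; symmetry; apply: hU; first exact: cross0_on_line.
  by exists 0; rewrite !mul0r !addr0; case: (Aj).
have fk : cross (vsub M Ai) (vsub Ak Ai) != 0.
  apply/eqP => h; apply: hk; symmetry; apply: hU; first exact: cross0_on_line.
  exists 1; case: (Aj) (Ak) => ? ? [? ?] /=; rewrite !mul1r; congr pair; ring.
split => //.
move: hX1 hX2 hj hk fj fk; case: Ai M Aj Ak X {hU hAM} => [a1 a2] [m1 m2] [b1 b2] [c1 c2] [x1 x2].
move=> [t [-> ->]] [s []] e1 e2; rewrite /sratio /cross /vsub /dist /dot /= => hj hk fj fk.
have s0 : s != 0.
  apply/eqP => s0; apply: hj; rewrite e1 e2 s0 !mul0r !addr0 //.
have s1 : 1 - s != 0.
  apply/eqP => s1; apply: hk; rewrite e1 e2 (_ : s = 1); last first.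
    by apply/eqP; rewrite -subr_eq0 -oppr_eq0 opprB s1.
  rewrite !mul1r; congr pair; ring.
set N := (c1 - b1) ^+ 2 + (c2 - b2) ^+ 2.
have N0 : 0 < N.
  rewrite /N lt0r addr_ge0 ?sqr_ge0 // andbT paddr_eq0 ?sqr_ge0 // !sqrf_eq0.
  apply/negP => /andP [/eqP h1 /eqP h2]; apply: hj; rewrite e1 e2.
  congr pair. rewrite h1 mulr0 addr0 //. rewrite h2 mulr0 addr0 //.
have Ej : (b1 - (a1 + t * (m1 - a1))) * (b1 - (a1 + t * (m1 - a1))) +
  (b2 - (a2 + t * (m2 - a2))) * (b2 - (a2 + t * (m2 - a2))) = s ^+ 2 * N.
  rewrite e1 e2 /N; ring.
have Ek : (c1 - (a1 + t * (m1 - a1))) * (c1 - (a1 + t * (m1 - a1))) +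
  (c2 - (a2 + t * (m2 - a2))) * (c2 - (a2 + t * (m2 - a2))) = (1 - s) ^+ 2 * N.
  rewrite e1 e2 /N; ring.
have Ed : (b1 - (a1 + t * (m1 - a1))) * (c1 - (a1 + t * (m1 - a1))) +
  (b2 - (a2 + t * (m2 - a2))) * (c2 - (a2 + t * (m2 - a2))) = - (s * (1 - s)) * N.
  rewrite e1 e2 /N; ring.
rewrite Ej Ek Ed !(sqrtrM _ (sqr_ge0 _)) !sqrtr_sqr.
have sN : Num.sqrt N != 0 by rewrite gt_eqF // sqrtr_gt0.
have -> : `|s| * Num.sqrt N / (`|1 - s| * Num.sqrt N) = `|s * (1 - s)| / (1 - s) ^+ 2.
  rewrite normrM -[(1 - s) ^+ 2]real_normK ?num_real //; field.
  by rewrite sN normr_eq0 s1.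
have key : (m1 - a1) * (b2 - a2) - (m2 - a2) * (b1 - a1) = - (s * (1 - s)) / (1 - s) ^+ 2 *
   ((m1 - a1) * (c2 - a2) - (m2 - a2) * (c1 - a1)).
  have h0 : (m1 - a1) * (b2 - a2) - (m2 - a2) * (b1 - a1) =
    (m1 - a1) * (b2 - a2) - (m2 - a2) * (b1 - a1) - (1 - s)^-1 *
    ((m1 - a1) * (b2 + s * (c2 - b2) - a2) - (m2 - a2) * (b1 + s * (c1 - b1) - a1)).
    rewrite -e1 -e2. have -> : (m1 - a1) * (a2 + t * (m2 - a2) - a2) - (m2 - a2) * (a1 + t * (m1 - a1) - a1) = 0 by ring.
    by rewrite mulr0 subr0.
  rewrite {1}h0; field; exact: s1.
rewrite key mulfK //.
have [p0|p0] := ltrP (s * (1 - s)) 0.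
- rewrite ifT; last by apply: mulr_ge0; [rewrite oppr_ge0 ltW|exact: ltW].
  by rewrite mul1r ltr0_norm // mulNr.
- have p0' : 0 < s * (1 - s) by rewrite lt0r mulf_neq0.
  rewrite ifF; last by apply/negbTE; rewrite -ltNge mulNr oppr_lt0 mulr_gt0.
  by rewrite gtr0_norm // mulNr mul1r mulNr.
Qed.
Lemma ordS_val {n : nat} (i : 'I_n) : val (ordS i) = if i.+1 == n then 0 else i.+1.
Proof.
rewrite /=; case: eqP => [->|h]; first by rewrite modnn.
by rewrite modn_small // ltn_neqAle ltn_ord andbT; apply/eqP.
Qed.

Lemma ordS_neq {n : nat} (i : 'I_n) : (2 <= n)%N -> ordS i != i.
Proof.
move=> h; apply/eqP => /(congr1 val); rewrite ordS_val.
have := ltn_ord i; case: eqP => /= e; lia.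
Qed.

Lemma ordS_neq_pred {n : nat} (i : 'I_n) : (3 <= n)%N -> ordS i != ord_pred i.
Proof.
move=> h; apply/eqP => /(congr1 (@ordS n)); rewrite ord_predK => /(congr1 val).
rewrite !ordS_val.
have := ltn_ord i; case: (@eqP _ i.+1 n) => /= e.
- by rewrite e; case: (@eqP _ 1 n) => /=; lia.
- by case: (@eqP _ i.+2 n) => /=; lia.
Qed.

Lemma pred_neq {n : nat} (i : 'I_n) : (2 <= n)%N -> ord_pred i != i.
Proof.
move=> h; apply/eqP => e; have := @ordS_neq n i h; rewrite -{1}e ord_predK eqxx //.
Qed.

Theorem mainTheorem3 (R : rcfType) (n : nat) (A : 'I_n -> R * R) (M : R * R)
    (Mij : 'I_n -> 'I_n -> R * R) :
  (3 <= n)%N ->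
  (forall j, A j <> A (ordS j)) ->
  (forall i, M <> A i) ->
  (forall i j, j != i -> j != ord_pred i ->
     [/\ on_line (A i) M (Mij i j),
         on_line (A j) (A (ordS j)) (Mij i j),
         (forall X, on_line (A i) M X -> on_line (A j) (A (ordS j)) X ->
                    X = Mij i j),
         Mij i j <> A j & Mij i j <> A (ordS j)]) ->
  \prod_(i < n) \prod_(j < n | (j != i) && (j != ord_pred i))
     sratio (Mij i j) (A j) (A (ordS j)) = (-1) ^+ n.
Proof.
move=> n3 _ hM hyp.
have n2 : (2 <= n)%N by apply: leq_trans n3.
pose g i j := cross (vsub M (A i)) (vsub (A j) (A i)).
have H : forall i j, j != i -> j != ord_pred i ->
  [/\ g i j != 0, g i (ordS j) != 0 & sratio (Mij i j) (A j) (A (ordS j)) = g i j / g i (ordS j)].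
  move=> i j h1 h2; have [a b c d e] := hyp i j h1 h2.
  apply: sratio_eq => //; exact: (fun E => hM i (esym E)).
pose c i := cross (vsub (A i) M) (vsub (A (ordS i)) M).
rewrite (eq_bigr (fun i => (- c i) / c (ord_pred i))); last first.
  move=> i _.
  rewrite (eq_bigr (fun j => g i j / g i (ordS j))); last first.
    by move=> j /andP [h1 h2]; case: (H i j h1 h2).
  rewrite prodf_div.
  rewrite [X in _ / X](reindex_inj (@ord_pred_inj n)) /=.
  under [X in _ / X]eq_bigr do rewrite ord_predK.
  rewrite [X in _ / X](eq_bigl (fun k => (k != ordS i) && (k != i))); last first.
    move=> k; congr andb.
      by rewrite -(inj_eq (@ordS_inj n)) ord_predK.
    by rewrite (inj_eq (@ord_pred_inj n)).
  rewrite (bigD1 (ordS i)) /=; last by rewrite ordS_neq // ordS_neq_pred.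
  rewrite [X in _ / X](bigD1 (ord_pred i)) /=; last first.
    by rewrite eq_sym ordS_neq_pred // pred_neq.
  set C1 := \prod_(j | _) _; set C2 := \prod_(j | _) _.
  have eC : C1 = C2.
    rewrite /C1 /C2; apply: eq_bigl => k.
    by case: (k == i); case: (k == ordS i); case: (k == ord_pred i).
  have C0 : C1 != 0.
    apply/prodf_neq0 => k /andP [/andP [h1 h2] _].
    by case: (H i k h1 h2).
  rewrite -eC invfM mulrACA divff // mulr1.
  congr (_ / _).
  + rewrite /g /c /cross /vsub /=; ring.
  + rewrite /g /c ord_predK /cross /vsub /=; ring.
rewrite prodf_div prodrN card_ord.
rewrite [X in _ / X](reindex_inj (@ordS_inj n)) /=.
under [X in _ / X]eq_bigr do rewrite ordSK.
have P0 : \prod_(i < n) c i != 0.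
  apply/prodf_neq0 => i _.
  have [h _ _] := H i (ordS i) (ordS_neq i n2) (ordS_neq_pred i n3).
  apply: contra h => /eqP h0; apply/eqP.
  have E : g i (ordS i) = - c i by rewrite /g /c /cross /vsub /=; ring.
  by rewrite E h0 oppr0.
by rewrite mulfK.
Qed.
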